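(* In dimension $3$, every possible Riemann curvature tensor occurs as the curvature tensor of a Hessian metric: for every algebraic curvature tensor $R$ on $\mathbb{R}^3$ with its standard inner product, there exist a Hessian metric $g$ on an open set $U\subset\mathbb{R}^3$, a point $p\in U$, and a linear isometry $(T_pU, g_p)\to\mathbb{R}^3$ carrying the Riemann curvature tensor of $g$ at $p$ to $R$.
   Context: A Riemannian metric $g$ is Hessian if around each point there are local coordinates $x$ and a function $\phi$ with $g_{ij} = \partial^2\phi/\partial x_i\partial x_j$. An algebraic curvature tensor on an inner product space $T$ is an element of $\Lambda^2T^*\otimes\Lambda^2T^*$ symmetric under exchanging the two pairs and satisfying the first Bianchi identity. *)

(* Defs.v *)
From HB Require Import structures.
From mathcomp Require Import all_boot all_order all_algebra.
From mathcomp Require Import all_classical all_reals all_analysis.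
Set Implicit Arguments. Unset Strict Implicit. Unset Printing Implicit Defensive.
Import Order.TTheory GRing.Theory Num.Theory.
Import numFieldNormedType.Exports.
Local Open Scope classical_set_scope.
Local Open Scope ring_scope.

Section Defs.
Variable R : realType.
Local Notation V := 'rV[R]_3.

Definition ev (i : 'I_3) : V := delta_mx 0 i.

Definition pd (i : 'I_3) (f : V -> R) : V -> R := fun x => 'D_(ev i) f x.

Definition iter_pd (l : seq 'I_3) (f : V -> R) : V -> R := foldr pd f l.

Definition smooth_on (U : set V) (f : V -> R) : Prop :=
  forall (l : seq 'I_3) (x : V), U x ->
    {for x, continuous (iter_pd l f)} /\ (forall i, derivable (iter_pd l f) x (ev i)).

Definition smooth_map_on (U : set V) (F : V -> V) : Prop :=
  forall i : 'I_3, smooth_on U (fun y => F y 0 i).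

(* Riemannian metric on the open set U, given by its matrix in standard coordinates *)
Definition riem_metric (U : set V) (g : V -> 'M[R]_3) : Prop :=
  open U /\ (forall i j, smooth_on U (fun y => g y i j)) /\
  (forall y, U y -> (g y)^T = g y /\
     forall v : V, v != 0 -> 0 < (v *m g y *m v^T) 0 0).

Definition jac (F : V -> V) (z : V) : 'M[R]_3 :=
  \matrix_(i, a) pd a (fun w => F w 0 i) z.

Definition hess (phi : V -> R) (z : V) : 'M[R]_3 :=
  \matrix_(a, b) pd a (pd b phi) z.

(* Hessian metric: around each point there are local coordinates psi (with smooth
   inverse chi) and a function phi such that the metric in these coordinates,
   (jac chi)^T g (jac chi), is the Hessian of phi. *)
Definition hessian_metric (U : set V) (g : V -> 'M[R]_3) : Prop :=
  riem_metric U g /\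
  forall q, U q -> exists (W : set V) (psi chi : V -> V) (phi : V -> R),
    open W /\ W q /\ W `<=` U /\ open (psi @` W) /\
    smooth_map_on W psi /\ smooth_map_on (psi @` W) chi /\
    (forall y, W y -> chi (psi y) = y) /\
    (forall z, (psi @` W) z -> psi (chi z) = z) /\
    smooth_on (psi @` W) phi /\
    (forall z, (psi @` W) z ->
       (jac chi z)^T *m g (chi z) *m jac chi z = hess phi z).

Definition christoffel (g : V -> 'M[R]_3) (k i j : 'I_3) (x : V) : R :=
  2^-1 * \sum_(l < 3) (invmx (g x)) k l *
    (pd i (fun y => g y j l) x + pd j (fun y => g y i l) x
       - pd l (fun y => g y i j) x).

(* R^l_{ijk}, with R(d_i, d_j) d_k = sum_l R^l_{ijk} d_l,
   R(X,Y) = nabla_X nabla_Y - nabla_Y nabla_X - nabla_[X,Y] *)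
Definition riem_up (g : V -> 'M[R]_3) (l i j k : 'I_3) (x : V) : R :=
  pd i (christoffel g l j k) x - pd j (christoffel g l i k) x
  + \sum_(m < 3) (christoffel g l i m x * christoffel g m j k x
                  - christoffel g l j m x * christoffel g m i k x).

(* Riemann curvature tensor Rm(d_i,d_j,d_k,d_l) = g(R(d_i,d_j)d_k, d_l) *)
Definition riem (g : V -> 'M[R]_3) (i j k l : 'I_3) (x : V) : R :=
  \sum_(m < 3) riem_up g m i j k x * g x m l.

(* 4-tensors on R^3 given by components in the standard (orthonormal) basis *)
Definition tensor4 := 'I_3 -> 'I_3 -> 'I_3 -> 'I_3 -> R.

Definition alg_curv (A : tensor4) : Prop :=
  forall i j k l,
    A i j k l = - A j i k l /\ A i j k l = - A i j l k /\
    A i j k l = A k l i j /\ A i j k l + A j k i l + A k i j l = 0.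

Definition ev4 (A : tensor4) (u1 u2 u3 u4 : V) : R :=
  \sum_(i < 3) \sum_(j < 3) \sum_(k < 3) \sum_(l < 3)
     A i j k l * u1 0 i * u2 0 j * u3 0 k * u4 0 l.

End Defs.

(* Main.v *)
Require Import Defs.
From HB Require Import structures.
From mathcomp Require Import all_boot all_order all_algebra.
From mathcomp Require Import all_classical all_reals all_analysis.
From mathcomp Require Import ring lra.
Set Implicit Arguments. Unset Strict Implicit. Unset Printing Implicit Defensive.
Import Order.TTheory GRing.Theory Num.Theory.
Import numFieldNormedType.Exports.
Local Open Scope classical_set_scope.
Local Open Scope ring_scope.

Section Poly.
Variable R : realType.
Local Notation V := 'rV[R]_3.

Inductive pe := PC of R | PV of 'I_3 | PA of pe & pe | PM of pe & pe.

Fixpoint pev (e : pe) (x : V) : R :=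
  match e with PC r => r | PV i => x 0 i | PA a b => pev a x + pev b x
  | PM a b => pev a x * pev b x end.

Fixpoint pdv (i : 'I_3) (e : pe) : pe :=
  match e with PC _ => PC 0 | PV j => PC (if nat_of_ord j == nat_of_ord i then 1 else 0)
  | PA a b => PA (pdv i a) (pdv i b)
  | PM a b => PA (PM (pdv i a) b) (PM a (pdv i b)) end.

Lemma coord_derive (j : 'I_3) (x v : V) :
  derivable (fun t : V => t 0 j) x v /\ 'D_v (fun t : V => t 0 j) x = v 0 j.
Proof.
have hd : derivable (id : V -> 'M[R]_(1,3)) x v by exact: derivable_id.
split; first exact: ((derivable_mxP _ _ _).1 hd 0 j).
have := derive_mx hd; rewrite derive_id => /matrixP /(_ 0 j).
by rewrite mxE => <-.
Qed.

Lemma coord_cont (j : 'I_3) : continuous (fun t : V => t 0 j).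
Proof.
move=> x; have FF := @mx_nbhs_filter _ _ _ x.
apply/(@cvgrPdist_lt _ _ _ _ FF) => e e0.
exists (fun i0 j0 => ball (x i0 j0) e).
  by move=> i0 j0; apply: nbhsx_ballx.
move=> y /= /(_ 0 j).
by rewrite /ball /=.
Qed.

Lemma pev_derive (e : pe) (i : 'I_3) (x : V) :
  derivable (pev e) x (ev R i) /\ 'D_(ev R i) (pev e) x = pev (pdv i e) x.
Proof.
elim: e x => [r|j|a iha b ihb|a iha b ihb] x /=.
- split; first exact: derivable_cst.
  exact: derive_cst.
- have [h1 h2] := coord_derive j x (ev R i).
  split=> //; rewrite h2 /ev mxE eqxx /=.
  case: ifP => [/eqP/val_inj ->|H]; first by rewrite eqxx.
  first [by rewrite H | by rewrite -[_ == _]/(nat_of_ord _ == nat_of_ord _) H | by move: H => /negbT; rewrite -(inj_eq val_inj) => /negbTE ->].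
- have [da Da] := iha x; have [db Db] := ihb x.
  have -> : (fun y => pev a y + pev b y) = pev a + pev b by [].
  by split; [exact: derivableD|rewrite deriveD // Da Db].
- have [da Da] := iha x; have [db Db] := ihb x.
  have -> : (fun y => pev a y * pev b y) = pev a * pev b by [].
  split; first exact: derivableM.
  rewrite deriveM // Da Db.
  by rewrite /GRing.scale /= addrC mulrC [X in _ + X]mulrC.
Qed.

Lemma pev_cont (e : pe) : continuous (pev e).
Proof.
elim: e => [r|j|a iha b ihb|a iha b ihb] /=.
- exact: cst_continuous.
- exact: coord_cont.
- by move=> x; apply: (@cvgD _ _ _ _ (@mx_nbhs_filter _ _ _ x)); [exact: iha|exact: ihb].
- by move=> x; apply: (@cvgM _ _ _ (@mx_nbhs_filter _ _ _ x)); [exact: iha|exact: ihb].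
Qed.


Variables a1 a2 a3 b12 b13 b21 b23 b31 b32 c : R.

Definition b2 (b : bool) : nat := if b then 1%N else 0%N.
Definition cnt (k i j m : nat) : nat := Nat.add (Nat.add (b2 (Nat.eqb i k)) (b2 (Nat.eqb j k))) (b2 (Nat.eqb m k)).
Definition cf (i j m : nat) : R :=
  match cnt 0 i j m, cnt 1 i j m with
  | 3%N,0%N => a1 | 0%N,3%N => a2 | 0%N,0%N => a3 | 2%N,1%N => b12 | 2%N,0%N => b13
  | 1%N,2%N => b21 | 0%N,2%N => b23 | 1%N,0%N => b31 | 0%N,1%N => b32 | 1%N,1%N => c | _,_ => 0 end.
Definition Cf (i j m : 'I_3) : R := cf i j m.

Definition o0 : 'I_3 := @Ordinal 3 0 isT.
Definition o1 : 'I_3 := @Ordinal 3 1 isT.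
Definition o2 : 'I_3 := @Ordinal 3 2 isT.
Definition X0 := PV o0.
Definition X1 := PV o1.
Definition X2 := PV o2.
Definition mon (k : R) (a b d : pe) := PM (PC k) (PM a (PM b d)).

Definition Phi : pe := foldr PA (PC 0)
  [:: PM (PC (2^-1)) (PM X0 X0); PM (PC (2^-1)) (PM X1 X1); PM (PC (2^-1)) (PM X2 X2);
      mon (a1/6) X0 X0 X0; mon (a2/6) X1 X1 X1; mon (a3/6) X2 X2 X2;
      mon (b12/2) X0 X0 X1; mon (b13/2) X0 X0 X2; mon (b21/2) X1 X1 X0;
      mon (b23/2) X1 X1 X2; mon (b31/2) X2 X2 X0; mon (b32/2) X2 X2 X1;
      mon c X0 X1 X2].

Definition Gs (i j : 'I_3) : pe :=
  PA (PC (if nat_of_ord i == nat_of_ord j then 1 else 0))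
     (PA (PM (PC (Cf i j o0)) X0) (PA (PM (PC (Cf i j o1)) X1) (PM (PC (Cf i j o2)) X2))).

Lemma L2 (i j : 'I_3) (z : V) : pev (pdv i (pdv j Phi)) z = pev (Gs i j) z.
Proof.
case: i => [[|[|[|//]]] Hi]; case: j => [[|[|[|//]]] Hj];
rewrite /= /Cf /cf /cnt /b2 /=; field; by do ?split; rewrite pnatr_eq0.
Qed.

Lemma L1 (i j k : 'I_3) (z : V) : pev (pdv k (Gs i j)) z = Cf i j k.
Proof.
case: k => [[|[|[|//]]] Hk]; rewrite /=; ring.
Qed.


Lemma ord3P (P : 'I_3 -> Prop) : P o0 -> P o1 -> P o2 -> forall i, P i.
Proof.
move=> h0 h1 h2 [[|[|[|//]]] Hi].
- by have -> : Ordinal Hi = o0 by apply: val_inj.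
- by have -> : Ordinal Hi = o1 by apply: val_inj.
- by have -> : Ordinal Hi = o2 by apply: val_inj.
Qed.

Lemma sum3E (F : 'I_3 -> R) : \sum_(i < 3) F i = F o0 + F o1 + F o2.
Proof.
rewrite !big_ord_recr big_ord0 /= add0r.
by congr (F _ + F _ + F _); apply: val_inj.
Qed.

Lemma pd_pev e i : pd i (pev e) = pev (pdv i e).
Proof. by apply/funext => x; rewrite /pd; exact: (pev_derive e i x).2. Qed.

Lemma iter_pev l e : iter_pd l (pev e) = pev (foldr pdv e l).
Proof.
elim: l => //= i l IH.
by rewrite /iter_pd /= in IH *; rewrite IH pd_pev.
Qed.

Lemma smooth_pev U e : smooth_on U (pev e).
Proof.
move=> l x _; rewrite iter_pev; split; first exact: pev_cont.
by move=> i; exact: (pev_derive _ i x).1.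
Qed.

Definition gm (x : V) : 'M[R]_3 := \matrix_(i, j) pev (Gs i j) x.

Lemma gm_entry i j : (fun y => gm y i j) = pev (Gs i j).
Proof. by apply/funext => y; rewrite mxE. Qed.

Lemma gm0 : gm 0 = 1%:M.
Proof.
apply/matrixP => i j; rewrite !mxE.
move: i j; apply: ord3P; apply: ord3P; rewrite /= !mxE /=; ring.
Qed.

Definition detE (M : 'M[R]_3) := M o0 o0 * (M o1 o1 * M o2 o2 - M o1 o2 * M o2 o1)
  - M o0 o1 * (M o1 o0 * M o2 o2 - M o1 o2 * M o2 o0)
  + M o0 o2 * (M o1 o0 * M o2 o1 - M o1 o1 * M o2 o0).

Definition adjf (M : 'M[R]_3) (i j : nat) : R := match i, j with
| 0%N,0%N => M o1 o1 * M o2 o2 - M o1 o2 * M o2 o1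
| 0%N,1%N => M o0 o2 * M o2 o1 - M o0 o1 * M o2 o2
| 0%N,2%N => M o0 o1 * M o1 o2 - M o0 o2 * M o1 o1
| 1%N,0%N => M o1 o2 * M o2 o0 - M o1 o0 * M o2 o2
| 1%N,1%N => M o0 o0 * M o2 o2 - M o0 o2 * M o2 o0
| 1%N,2%N => M o0 o2 * M o1 o0 - M o0 o0 * M o1 o2
| 2%N,0%N => M o1 o0 * M o2 o1 - M o1 o1 * M o2 o0
| 2%N,1%N => M o0 o1 * M o2 o0 - M o0 o0 * M o2 o1
| _,_ => M o0 o0 * M o1 o1 - M o0 o1 * M o1 o0 end.

Definition adjE (M : 'M[R]_3) : 'M[R]_3 := \matrix_(i, j) adjf M i j.

Lemma adjE_mul M : adjE M *m M = detE M *: 1%:M.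
Proof.
apply/matrixP => i j; rewrite !mxE sum3E !mxE.
move: i j; apply: ord3P; apply: ord3P; rewrite /detE /adjf /=; ring.
Qed.

Lemma invmxE3 M : detE M != 0 -> invmx M = (detE M)^-1 *: adjE M.
Proof.
move=> d0; set N := _ *: adjE M.
have NM : N *m M = 1%:M by rewrite /N -scalemxAl adjE_mul scalerA mulVf // scale1r.
have [_ Mu] := mulmx1_unit NM.
have MN := mulmx1C NM.
by rewrite -[invmx M]mulmx1 -MN mulmxA mulVmx // mul1mx.
Qed.


Definition pneg a := PM (PC (-1)) a.
Definition psub a b := PA a (pneg b).

Definition detP (F : 'I_3 -> 'I_3 -> pe) : pe :=
  PA (psub (PM (F o0 o0) (psub (PM (F o1 o1) (F o2 o2)) (PM (F o1 o2) (F o2 o1))))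
           (PM (F o0 o1) (psub (PM (F o1 o0) (F o2 o2)) (PM (F o1 o2) (F o2 o0)))))
     (PM (F o0 o2) (psub (PM (F o1 o0) (F o2 o1)) (PM (F o1 o1) (F o2 o0)))).

Definition adjPn (F : 'I_3 -> 'I_3 -> pe) (i j : nat) : pe := match i, j with
| 0%N,0%N => psub (PM (F o1 o1) (F o2 o2)) (PM (F o1 o2) (F o2 o1))
| 0%N,1%N => psub (PM (F o0 o2) (F o2 o1)) (PM (F o0 o1) (F o2 o2))
| 0%N,2%N => psub (PM (F o0 o1) (F o1 o2)) (PM (F o0 o2) (F o1 o1))
| 1%N,0%N => psub (PM (F o1 o2) (F o2 o0)) (PM (F o1 o0) (F o2 o2))
| 1%N,1%N => psub (PM (F o0 o0) (F o2 o2)) (PM (F o0 o2) (F o2 o0))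
| 1%N,2%N => psub (PM (F o0 o2) (F o1 o0)) (PM (F o0 o0) (F o1 o2))
| 2%N,0%N => psub (PM (F o1 o0) (F o2 o1)) (PM (F o1 o1) (F o2 o0))
| 2%N,1%N => psub (PM (F o0 o1) (F o2 o0)) (PM (F o0 o0) (F o2 o1))
| _,_ => psub (PM (F o0 o0) (F o1 o1)) (PM (F o0 o1) (F o1 o0)) end.
Definition adjP F (i j : 'I_3) := adjPn F i j.

Lemma pev_detP F x : pev (detP F) x = detE (\matrix_(i, j) pev (F i j) x).
Proof. rewrite /detE !mxE /=; ring. Qed.

Lemma pev_adjP F i j x : pev (adjP F i j) x = adjE (\matrix_(i, j) pev (F i j) x) i j.
Proof. move: i j; apply: ord3P; apply: ord3P; rewrite !mxE /adjf /= !mxE; ring. Qed.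

Lemma hkey k l m : pev (pdv m (adjP Gs k l)) 0 - pev (adjP Gs k l) 0 * pev (pdv m (detP Gs)) 0 = - Cf k l m.
Proof. move: k l m; apply: ord3P; apply: ord3P; apply: ord3P; rewrite /= !mxE /=; ring. Qed.

Lemma hder k l m : derivable (fun x => invmx (gm x) k l) 0 (ev R m) /\
  'D_(ev R m) (fun x => invmx (gm x) k l) 0 = - Cf k l m.
Proof.
have hdet x : pev (detP Gs) x = detE (gm x) by rewrite pev_detP.
have hadj x : pev (adjP Gs k l) x = adjE (gm x) k l by rewrite pev_adjP.
have d0 : pev (detP Gs) 0 = 1 by rewrite hdet gm0 /detE !mxE /=; ring.
have FF := @mx_nbhs_filter 1 3 R 0.
have nz : \forall x \near (0:V), pev (detP Gs) x != 0.
  have hc : pev (detP Gs) @ (0:V) --> pev (detP Gs) 0 by apply: pev_cont.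
  move: hc.
  move/(@cvgrPdist_lt _ _ _ _ FF) => /(_ 1 ltr01).
  apply: (@filterS _ _ FF) => x; rewrite d0 => h; apply/eqP => e; move: h.
  by rewrite e subr0 normr1 ltxx.
set q := (fun x => (pev (detP Gs) x)^-1) * pev (adjP Gs k l).
have eqn : \forall x \near (0:V), invmx (gm x) k l = q x.
  apply: (@filterS _ _ FF) nz => x nx.
  by rewrite invmxE3 -?hdet // mxE -hadj.
have [dd Dd] := pev_derive (detP Gs) m 0.
have [da Da] := pev_derive (adjP Gs k l) m 0.
have dV : derivable (fun x => (pev (detP Gs) x)^-1) 0 (ev R m).
  by apply: derivableV => //; rewrite d0 oner_neq0.
have dq : derivable q 0 (ev R m) by apply: derivableM.
split.
  apply: near_eq_derivable dq.
  by apply: (@filterS _ _ FF) eqn => x ->.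
rewrite (near_eq_derive _ eqn) /q deriveM // deriveV ?d0 ?oner_neq0 // Dd Da.
rewrite -(hkey k l m).
set A := pev (pdv m (adjP Gs k l)) 0; set B := pev (adjP Gs k l) 0.
set C := pev (pdv m (detP Gs)) 0.
rewrite /GRing.scale /= invr1 expr1n invr1; ring.
Qed.

End Poly.


Section Curv.
Variable R : realType.
Local Notation V := 'rV[R]_3.
Variables a1 a2 a3 b12 b13 b21 b23 b31 b32 c : R.
Local Notation CF := (Cf a1 a2 a3 b12 b13 b21 b23 b31 b32 c).
Local Notation GM := (gm a1 a2 a3 b12 b13 b21 b23 b31 b32 c).

Lemma pd_gm i j l x : pd i (fun y => GM y j l) x = CF j l i.
Proof. by rewrite gm_entry pd_pev L1. Qed.

Definition Gam i j l := CF j l i + CF i l j - CF i j l.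

Lemma chrE k i j : christoffel GM k i j = fun x => 2^-1 *
  (invmx (GM x) k o0 * Gam i j o0 + invmx (GM x) k o1 * Gam i j o1
   + invmx (GM x) k o2 * Gam i j o2).
Proof. by apply/funext => x; rewrite /christoffel sum3E !pd_gm. Qed.

Lemma lin3 (f0 f1 f2 : V -> R) r s0 s1 s2 x v :
  derivable f0 x v -> derivable f1 x v -> derivable f2 x v ->
  'D_v (fun x => r * (f0 x * s0 + f1 x * s1 + f2 x * s2)) x =
  r * ('D_v f0 x * s0 + 'D_v f1 x * s1 + 'D_v f2 x * s2).
Proof.
move=> d0 d1 d2.
have dd (f : V -> R) s : derivable f x v ->
    derivable (f * cst s) x v /\ 'D_v (f * cst s) x = 'D_v f x * s.
  move=> df; split; first by apply: derivableM => //; exact: derivable_cst.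
  by rewrite deriveM // derive_cst /GRing.scale /= mulr0 add0r mulrC.
have [e0 E0] := dd _ s0 d0; have [e1 E1] := dd _ s1 d1; have [e2 E2] := dd _ s2 d2.
have -> : (fun x => r * (f0 x * s0 + f1 x * s1 + f2 x * s2)) =
   cst r * (f0 * cst s0 + f1 * cst s1 + f2 * cst s2) by apply/funext.
have e01 : derivable (f0 * cst s0 + f1 * cst s1) x v by apply: derivableD.
have e012 : derivable (f0 * cst s0 + f1 * cst s1 + f2 * cst s2) x v by apply: derivableD.
have dc : derivable (cst r : V -> R) x v := derivable_cst _ _ _.
rewrite deriveM //.
by rewrite derive_cst !deriveD // E0 E1 E2 /GRing.scale /= mulr0 addr0.
Qed.

Lemma dchr k i j m : 'D_(ev R m) (christoffel GM k i j) 0 =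
  2^-1 * (- CF k o0 m * Gam i j o0 - CF k o1 m * Gam i j o1 - CF k o2 m * Gam i j o2).
Proof.
rewrite chrE lin3; try exact: (hder a1 a2 a3 b12 b13 b21 b23 b31 b32 c _ _ m).1.
by rewrite !(hder a1 a2 a3 b12 b13 b21 b23 b31 b32 c _ _ m).2 !mulNr.
Qed.

Lemma chr0 k i j : christoffel GM k i j 0 = 2^-1 * Gam i j k.
Proof.
rewrite chrE gm0 invmx1 !mxE.
move: k; apply: ord3P; rewrite /=; ring.
Qed.

Definition dG l j k i := 2^-1 * (- CF l o0 i * Gam j k o0 - CF l o1 i * Gam j k o1
   - CF l o2 i * Gam j k o2).
Definition G0 k i j := 2^-1 * Gam i j k.
Definition Rx i j k l := dG l j k i - dG l i k j +
  \sum_(m < 3) (G0 l i m * G0 m j k - G0 l j m * G0 m i k).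

Lemma riem_up0 l i j k : riem_up GM l i j k 0 = Rx i j k l.
Proof.
rewrite /riem_up /pd !dchr.
by under eq_bigr => m _ do rewrite !chr0.
Qed.

Lemma riem0 i j k l : riem GM i j k l 0 = Rx i j k l.
Proof.
rewrite /riem gm0 sum3E !mxE !riem_up0.
move: l; apply: ord3P => /=; ring.
Qed.

Definition Dform i j k l :=
  4^-1 * \sum_(q < 3) (CF i k q * CF j l q - CF i l q * CF j k q).

Lemma Rx_Dform i j k l : Rx i j k l = Dform i j k l.
Proof.
move: i j k l; apply: ord3P; apply: ord3P; apply: ord3P; apply: ord3P;
rewrite /Rx /Dform /dG /G0 /Gam !sum3E /Cf /cf /cnt /b2 /=; field; do ?split; rewrite ?pnatr_eq0 //=.
Qed.

End Curv.


Ltac fld := field; repeat match goal with H : is_true (_ != 0) |- _ => rewrite H; clear H end; by [].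

Section Alg.
Variable R : realType.

Definition Deq (a1 a2 a3 b12 b13 b21 b23 b31 b32 c T11 T22 T33 X Y Z : R) : Prop :=
  [/\ a1*b21 + a2*b12 - b12^+2 - b21^+2 + b13*b23 - c^+2 = T11,
      a1*b31 + a3*b13 - b13^+2 - b31^+2 + b12*b32 - c^+2 = T22,
      a2*b32 + a3*b23 - b23^+2 - b32^+2 + b21*b31 - c^+2 = T33,
      a1*c - b12*b13 + b12*b23 - c*b21 + b13*b32 - c*b31 = X &
      (b12*c - b13*b21 + b21*b23 - c*a2 + c*b32 - b31*b23 = Y /\
       b12*b31 - b13*c + b21*b32 - c*b23 + c*a3 - b31*b32 = Z)].

Definition Solv (T11 T22 T33 X Y Z : R) : Prop :=
  exists a1 a2 a3 b12 b13 b21 b23 b31 b32 c, Deq a1 a2 a3 b12 b13 b21 b23 b31 b32 c T11 T22 T33 X Y Z.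

Lemma famXZ T11 T22 T33 X Y Z P c : X != 0 -> Z != 0 -> c != 0 ->
  c^+2 * ((P - T11)*(P - T22) - X^+2) = P * X^+2 -> Solv T11 T22 T33 X Y Z.
Proof.
move=> hX hZ hc key.
pose b21 := c*(T11-P)/X; pose b31 := c*(T22-P)/X; pose b23 := c*(T33-P)/Z.
exists (X/c + b21 + b31), ((b21*b23 - b31*b23 - Y)/c), (Z/c + b23), 0, 0, b21, b23, b31, 0, c.
rewrite /b21 /b31 /b23; split; [| | | |split].
- transitivity (T11 + (c^+2 * ((P - T11)*(P - T22) - X^+2) - P * X^+2)/X^+2);
    first by fld.
  by rewrite key subrr mul0r addr0.
- transitivity (T22 + (c^+2 * ((P - T11)*(P - T22) - X^+2) - P * X^+2)/X^+2);
    first by fld.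
  by rewrite key subrr mul0r addr0.
- transitivity (T33 + (c^+2 * ((P - T11)*(P - T22) - X^+2) - P * X^+2)/X^+2);
    first by fld.
  by rewrite key subrr mul0r addr0.
- by fld.
- by fld.
- by fld.
Qed.

Lemma famXY T11 T22 T33 X Y Z P c : X != 0 -> Y != 0 -> c != 0 ->
  c^+2 * ((P - T11)*(P - T22) - X^+2) = P * X^+2 -> Solv T11 T22 T33 X Y Z.
Proof.
move=> hX hY hc key.
pose b21 := c*(T11-P)/X; pose b31 := c*(T22-P)/X; pose b32 := c*(P-T33)/Y.
exists (X/c + b21 + b31), (b32 - Y/c), ((Z - b21*b32 + b31*b32)/c), 0, 0, b21, 0, b31, b32, c.
rewrite /b21 /b31 /b32; split; [| | | |split].
- transitivity (T11 + (c^+2 * ((P - T11)*(P - T22) - X^+2) - P * X^+2)/X^+2);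
    first by fld.
  by rewrite key subrr mul0r addr0.
- transitivity (T22 + (c^+2 * ((P - T11)*(P - T22) - X^+2) - P * X^+2)/X^+2);
    first by fld.
  by rewrite key subrr mul0r addr0.
- transitivity (T33 + (c^+2 * ((P - T11)*(P - T22) - X^+2) - P * X^+2)/X^+2);
    first by fld.
  by rewrite key subrr mul0r addr0.
- by fld.
- by fld.
- by fld.
Qed.

Lemma famYZ T11 T22 T33 X Y Z P c : Y != 0 -> Z != 0 -> c != 0 ->
  c^+2 * ((P - T22)*(P - T33) - Z^+2) = P * Z^+2 -> Solv T11 T22 T33 X Y Z.
Proof.
move=> hY hZ hc key.
pose b13 := c*(T22-P)/Z; pose b23 := c*(T33-P)/Z; pose b12 := c*(P-T11)/Y.
exists ((X + b12*b13 - b12*b23)/c), (b12 - Y/c), (Z/c + b13 + b23), b12, b13, 0, b23, 0, 0, c.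
rewrite /b13 /b23 /b12; split; [| | | |split].
- transitivity (T11 + (c^+2 * ((P - T22)*(P - T33) - Z^+2) - P * Z^+2)/Z^+2);
    first by fld.
  by rewrite key subrr mul0r addr0.
- transitivity (T22 + (c^+2 * ((P - T22)*(P - T33) - Z^+2) - P * Z^+2)/Z^+2);
    first by fld.
  by rewrite key subrr mul0r addr0.
- transitivity (T33 + (c^+2 * ((P - T22)*(P - T33) - Z^+2) - P * Z^+2)/Z^+2);
    first by fld.
  by rewrite key subrr mul0r addr0.
- by fld.
- by fld.
- by fld.
Qed.

Lemma famF3 T11 T22 T33 Z w u : w != 0 ->
  u * (T33 - T22 + Z*(w - w^-1)) = T11 - T22 - Z*T22/w + Z*w + Z^+2 ->
  Solv T11 T22 T33 0 0 Z.
Proof.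
move=> hw key.
pose b21 := Z + w*(1-u).
exists ((T22 + w^+2 - u)/w), (T33 + 1 - b21*w), 0, u, 0, b21, 0, w, 1, 0.
rewrite /b21; split; [| | | |split].
- transitivity (T11 + (u * (T33 - T22 + Z*(w - w^-1)) - (T11 - T22 - Z*T22/w + Z*w + Z^+2)));
    first by fld.
  by rewrite key subrr addr0.
- by fld.
- by fld.
- by fld.
- by fld.
- by fld.
Qed.

Lemma famF1 T11 T22 T33 X w u : w != 0 ->
  u * (T22 - T11 + X*(w - w^-1)) = T33 - T11 - X*T11/w + X*w + X^+2 ->
  Solv T11 T22 T33 X 0 0.
Proof.
move=> hw key.
pose b32 := X + w*(1-u).
exists 0, ((T11 + w^+2 - u)/w), (T22 + 1 - w*b32), w, 1, 0, u, 0, b32, 0.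
rewrite /b32; split; [| | | |split].
- by fld.
- by fld.
- transitivity (T33 + (u * (T22 - T11 + X*(w - w^-1)) - (T33 - T11 - X*T11/w + X*w + X^+2)));
    first by fld.
  by rewrite key subrr addr0.
- by fld.
- by fld.
- by fld.
Qed.

Lemma famF2 T11 T22 T33 Y w u : w != 0 ->
  u * (T33 - T11 - Y*(w - w^-1)) = T22 - T11 + Y*T11/w - Y*w + Y^+2 ->
  Solv T11 T22 T33 0 Y 0.
Proof.
move=> hw key.
pose b31 := w*(1-u) - Y.
exists ((T11 + w^+2 - u)/w), 0, (T33 + 1 - w*b31), 0, u, w, 1, b31, 0, 0.
rewrite /b31; split; [| | | |split].
- by fld.
- transitivity (T22 + (u * (T33 - T11 - Y*(w - w^-1)) - (T22 - T11 + Y*T11/w - Y*w + Y^+2)));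
    first by fld.
  by rewrite key subrr addr0.
- by fld.
- by fld.
- by fld.
- by fld.
Qed.


Lemma Pc (A B X : R) : X != 0 ->
  exists P c, c != 0 /\ c^+2 * ((P - A)*(P - B) - X^+2) = P * X^+2.
Proof.
move=> hX.
pose P := `|A| + `|B| + `|X| + 1.
have hA := ler_norm A; have hB := ler_norm B.
have nA := normr_ge0 A; have nB := normr_ge0 B; have nX := normr_ge0 X.
have e1 : `|X| + 1 <= P - A by rewrite /P; lra.
have e2 : `|X| + 1 <= P - B by rewrite /P; lra.
have hX2 : `|X|^+2 = X^+2 by rewrite real_normK // num_real.
have hP : 0 < P by rewrite /P; lra.
have al0 : 0 < (P - A)*(P - B) - X^+2.
  have : (`|X| + 1) * (`|X| + 1) <= (P - A) * (P - B).
    by apply: ler_pM => //; lra.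
  rewrite -hX2; nra.
have X20 : 0 < X^+2 by rewrite -hX2 exprn_gt0 // normr_gt0.
have arg0 : 0 < P * X^+2 / ((P - A)*(P - B) - X^+2).
  by apply: divr_gt0 => //; apply: mulr_gt0.
exists P, (Num.sqrt (P * X^+2 / ((P - A)*(P - B) - X^+2))); split.
  by rewrite gt_eqF // sqrtr_gt0.
rewrite sqr_sqrtr; last exact: ltW.
by field; rewrite gt_eqF.
Qed.

Lemma pick_wu (d Z0 : R) (r : R -> R) : d != 0 \/ Z0 != 0 ->
  exists w u, w != 0 /\ u * (d + Z0*(w - w^-1)) = r w.
Proof.
case: (eqVneq d 0) => hd H.
  have hZ : Z0 != 0 by case: H => //; rewrite hd eqxx.
  have k0 : Z0 * (2 - 2^-1) != 0.
    rewrite mulf_neq0 //; apply/eqP => e.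
    have : (2:R) - 2^-1 = 3/2 by field.
    rewrite e => /eqP; rewrite eq_sym mulf_eq0 invr_eq0 !pnatr_eq0 //.
  exists 2, (r 2 / (Z0 * (2 - 2^-1))); split; first by rewrite pnatr_eq0.
  by rewrite hd add0r mulfVK.
exists 1, (r 1 / d); split; first exact: oner_neq0.
by rewrite invr1 subrr mulr0 addr0 mulfVK.
Qed.

Lemma solv_all T11 T22 T33 X Y Z : Solv T11 T22 T33 X Y Z.
Proof.
case: (eqVneq X 0) => hX; case: (eqVneq Y 0) => hY; case: (eqVneq Z 0) => hZ.
- rewrite hX hY hZ.
  case: (eqVneq (T33 - T22) 0) => d0.
    case: (eqVneq T11 T22) => e.
      apply: (@famF3 _ _ _ _ 1 0); first exact: oner_neq0.
      by rewrite e; ring.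
    apply: (@famF1 _ _ _ _ 1 ((T33 - T11)/(T22 - T11))); first exact: oner_neq0.
    have ne : T22 - T11 != 0 by rewrite subr_eq0 eq_sym.
    by field.
  apply: (@famF3 _ _ _ _ 1 ((T11 - T22)/(T33 - T22))); first exact: oner_neq0.
  by field.
- rewrite hX hY.
  have [w [u [hw hu]]] := @pick_wu (T33 - T22) Z
     (fun w => T11 - T22 - Z*T22/w + Z*w + Z^+2) (or_intror hZ).
  exact: (@famF3 _ _ _ _ w u).
- rewrite hX hZ.
  have hY' : - Y != 0 by rewrite oppr_eq0.
  have [w [u [hw hu]]] := @pick_wu (T33 - T11) (- Y)
     (fun w => T22 - T11 + Y*T11/w - Y*w + Y^+2) (or_intror hY').
  by apply: (@famF2 _ _ _ _ w u) => //; rewrite -hu mulNr.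
- have [P [c [hc key]]] := Pc T22 T33 hZ.
  exact: (@famYZ _ _ _ _ _ _ P c).
- rewrite hY hZ.
  have [w [u [hw hu]]] := @pick_wu (T22 - T11) X
     (fun w => T33 - T11 - X*T11/w + X*w + X^+2) (or_intror hX).
  exact: (@famF1 _ _ _ _ w u).
- have [P [c [hc key]]] := Pc T11 T22 hX.
  exact: (@famXZ _ _ _ _ _ _ P c).
- have [P [c [hc key]]] := Pc T11 T22 hX.
  exact: (@famXY _ _ _ _ _ _ P c).
- have [P [c [hc key]]] := Pc T11 T22 hX.
  exact: (@famXZ _ _ _ _ _ _ P c).
Qed.

End Alg.


Section Sym.
Variable R : realType.
Definition tsym (P : tensor4 R) := forall i j k l,
  P i j k l = - P j i k l /\ P i j k l = - P i j l k /\ P i j k l = P k l i j.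

Ltac inst H i j k l :=
  let h1 := fresh in let h2 := fresh in let h3 := fresh in
  have [h1 [h2 h3]] := H i j k l.

Lemma tensor_ext (A B : tensor4 R) : tsym A -> tsym B ->
  A o0 o1 o0 o1 = B o0 o1 o0 o1 -> A o0 o2 o0 o2 = B o0 o2 o0 o2 ->
  A o1 o2 o1 o2 = B o1 o2 o1 o2 -> A o0 o1 o0 o2 = B o0 o1 o0 o2 ->
  A o0 o1 o1 o2 = B o0 o1 o1 o2 -> A o0 o2 o1 o2 = B o0 o2 o1 o2 ->
  forall i j k l, A i j k l = B i j k l.
Proof.
move=> hA hB e1 e2 e3 e4 e5 e6.
apply: ord3P; apply: ord3P; apply: ord3P; apply: ord3P;
match goal with |- A ?i ?j ?k ?l = _ =>
  inst hA i j k l; inst hA j i k l; inst hA i j l k; inst hA j i l k;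
  inst hB i j k l; inst hB j i k l; inst hB i j l k; inst hB j i l k;
  inst hA k l i j; inst hA l k i j; inst hA k l j i; inst hA l k j i;
  inst hB k l i j; inst hB l k i j; inst hB k l j i; inst hB l k j i
end; lra.
Qed.
End Sym.

Section Final.
Variable R : realType.
Local Notation V := 'rV[R]_3.
Variables a1 a2 a3 b12 b13 b21 b23 b31 b32 c : R.
Local Notation CF := (Cf a1 a2 a3 b12 b13 b21 b23 b31 b32 c).
Local Notation DF := (Dform a1 a2 a3 b12 b13 b21 b23 b31 b32 c).

Lemma Cf_sym12 i j m : CF i j m = CF j i m.
Proof. by move: i j m; apply: ord3P; apply: ord3P; apply: ord3P. Qed.
Lemma Cf_sym23 i j m : CF i j m = CF i m j.
Proof. by move: i j m; apply: ord3P; apply: ord3P; apply: ord3P. Qed.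

Lemma DF_sym : tsym DF.
Proof.
move=> i j k l; split; [|split].
- rewrite /Dform -mulrN -sumrN; congr (_ * _); apply: eq_bigr => q _; ring.
- rewrite /Dform -mulrN -sumrN; congr (_ * _); apply: eq_bigr => q _; ring.
- rewrite /Dform; congr (_ * _); apply: eq_bigr => q _.
  rewrite (Cf_sym12 k i) (Cf_sym12 l j) (Cf_sym12 k j) (Cf_sym12 l i); ring.
Qed.

Lemma DF_base :
  [/\ 4 * DF o0 o1 o0 o1 = a1*b21 + a2*b12 - b12^+2 - b21^+2 + b13*b23 - c^+2,
      4 * DF o0 o2 o0 o2 = a1*b31 + a3*b13 - b13^+2 - b31^+2 + b12*b32 - c^+2,
      4 * DF o1 o2 o1 o2 = a2*b32 + a3*b23 - b23^+2 - b32^+2 + b21*b31 - c^+2,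
      4 * DF o0 o1 o0 o2 = a1*c - b12*b13 + b12*b23 - c*b21 + b13*b32 - c*b31 &
      (4 * DF o0 o1 o1 o2 = b12*c - b13*b21 + b21*b23 - c*a2 + c*b32 - b31*b23 /\
       4 * DF o0 o2 o1 o2 = b12*b31 - b13*c + b21*b32 - c*b23 + c*a3 - b31*b32)].
Proof.
rewrite /Dform !sum3E /Cf /cf /cnt /b2 /=.
split; [| | | |split]; field; by rewrite ?pnatr_eq0.
Qed.

End Final.


Section PD.
Variable R : realType.
Local Notation V := 'rV[R]_3.

Lemma cross (a b e : R) : `|e| <= 6^-1 -> -((a^+2 + b^+2)/12) <= a*b*e.
Proof.
move=> he; have := ler_norm e; have := ler_norm (- e); rewrite normrN => n1 n2.
have h1 : - 6^-1 <= e by lra.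
have h2 : e <= 6^-1 by lra.
have h3 : 0 <= (6^-1 + e) * (a+b)^+2 by apply: mulr_ge0; [lra|exact: sqr_ge0].
have h4 : 0 <= (6^-1 - e) * (a-b)^+2 by apply: mulr_ge0; [lra|exact: sqr_ge0].
nra.
Qed.

Lemma qf_pos (v : V) (M : 'M[R]_3) :
  (forall i k, `|M i k - (i == k)%:R| <= 6^-1) -> v != 0 -> 0 < (v *m M *m v^T) 0 0.
Proof.
move=> hM hv.
have hs : 0 < v 0 o0 ^+ 2 + v 0 o1 ^+ 2 + v 0 o2 ^+ 2.
  have [i vi] : exists i, v 0 i != 0.
    apply/existsP; apply: contraR hv => /existsPn H; apply/eqP/matrixP => a b.
    by rewrite (ord1 a) mxE; apply/eqP; move: (H b); rewrite negbK.
  have := sqr_ge0 (v 0 o0); have := sqr_ge0 (v 0 o1); have := sqr_ge0 (v 0 o2).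
  have : 0 < v 0 i ^+ 2 by rewrite exprn_even_gt0.
  by move: i vi; apply: ord3P => _ *; lra.
rewrite !(mxE, sum3E).
have f i k := cross (v 0 i) (v 0 k) (hM i k).
have := f o0 o0; have := f o0 o1; have := f o0 o2;
have := f o1 o0; have := f o1 o1; have := f o1 o2;
have := f o2 o0; have := f o2 o1; have := f o2 o2.
rewrite /=. nra.
Qed.

Variables a1 a2 a3 b12 b13 b21 b23 b31 b32 c : R.
Local Notation CF := (Cf a1 a2 a3 b12 b13 b21 b23 b31 b32 c).
Local Notation GM := (gm a1 a2 a3 b12 b13 b21 b23 b31 b32 c).

Lemma gm_val (y : V) i k : GM y i k - (i == k)%:R =
  CF i k o0 * y 0 o0 + (CF i k o1 * y 0 o1 + CF i k o2 * y 0 o2).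
Proof.
rewrite mxE /=.
have E : (nat_of_ord i == nat_of_ord k) = (i == k) by [].
rewrite E; case: (i == k); rewrite ?mulr1n ?mulr0n; ring.
Qed.

Lemma gm_pd : exists del : R, 0 < del /\ forall y : V, ball (0:V) del y ->
  forall v : V, v != 0 -> 0 < (v *m GM y *m v^T) 0 0.
Proof.
pose K := 1 + (`|a1| + `|a2| + `|a3| + `|b12| + `|b13| + `|b21| + `|b23| + `|b31| + `|b32| + `|c|).
have := normr_ge0 a1; have := normr_ge0 a2; have := normr_ge0 a3;
have := normr_ge0 b12; have := normr_ge0 b13; have := normr_ge0 b21;
have := normr_ge0 b23; have := normr_ge0 b31; have := normr_ge0 b32;
have := normr_ge0 c => n1 n2 n3 n4 n5 n6 n7 n8 n9 n10.
have hK i j m : `|CF i j m| <= K.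
  move: i j m; apply: ord3P; apply: ord3P; apply: ord3P;
  rewrite /Cf /cf /cnt /b2 /= /K; lra.
have K1 : 1 <= K by rewrite /K; lra.
have K0 : 0 < K by lra.
exists (18 * K)^-1; split; first by rewrite invr_gt0 mulr_gt0.
move=> y hy v hv; apply: qf_pos => // i k.
have hy' m : `|y 0 m| <= (18 * K)^-1.
  move: hy; rewrite -ball_normE /ball_ /= sub0r normrN => hy.
  apply/ltW; apply: le_lt_trans hy.
  rewrite [leRHS]/Num.Def.normr/= mx_normrE.
  apply: le_trans; last exact: (le_bigmax _ _ (0, m)).
  by [].
have t m : `|CF i k m * y 0 m| <= K * (18 * K)^-1.
  by rewrite normrM; apply: ler_pM => //; exact: normr_ge0.
have e : K * (18 * K)^-1 = 18^-1 by field; rewrite gt_eqF.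
rewrite gm_val; apply: le_trans (ler_normD _ _) _.
apply: le_trans (lerD (lexx _) (ler_normD _ _)) _.
have := t o0; have := t o1; have := t o2; rewrite e => s0 s1 s2; lra.
Qed.

End PD.


Section Metric.
Variable R : realType.
Local Notation V := 'rV[R]_3.
Variables a1 a2 a3 b12 b13 b21 b23 b31 b32 c : R.
Local Notation CF := (Cf a1 a2 a3 b12 b13 b21 b23 b31 b32 c).
Local Notation GM := (gm a1 a2 a3 b12 b13 b21 b23 b31 b32 c).
Local Notation PHI := (Phi a1 a2 a3 b12 b13 b21 b23 b31 b32 c).

Lemma jac_id (z : V) : jac id z = 1%:M.
Proof.
apply/matrixP => i a; rewrite !mxE.
rewrite (_ : (fun w : V => id w 0 i) = pev (@PV R i)) // pd_pev /=.
have E : (nat_of_ord i == nat_of_ord a) = (i == a) by [].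
by rewrite E; case: (i == a).
Qed.

Lemma hess_Phi (z : V) : hess (pev PHI) z = GM z.
Proof.
by apply/matrixP => a b; rewrite !mxE !pd_pev L2.
Qed.

Lemma metric_ok del : (forall y : V, ball (0:V) del y ->
  forall v : V, v != 0 -> 0 < (v *m GM y *m v^T) 0 0) ->
  hessian_metric (ball (0:V) del) GM.
Proof.
move=> hpd; split.
  split; first exact: ball_open.
  split; first by move=> i j; rewrite gm_entry; exact: smooth_pev.
  move=> y hy; split; last exact: hpd.
  apply/matrixP => i j; rewrite !mxE /=.
  have E : (nat_of_ord j == nat_of_ord i) = (nat_of_ord i == nat_of_ord j) by rewrite eq_sym.
  by rewrite E !(Cf_sym12 _ _ _ _ _ _ _ _ _ _ j i).
move=> q hq.
exists (ball (0:V) del), id, id, (pev PHI).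
rewrite image_id.
split; first exact: ball_open.
split; first by [].
split; first by [].
split; first exact: ball_open.
split; first by move=> i; rewrite (_ : (fun y : V => id y 0 i) = pev (@PV R i)) //; exact: smooth_pev.
split; first by move=> i; rewrite (_ : (fun y : V => id y 0 i) = pev (@PV R i)) //; exact: smooth_pev.
split; first by [].
split; first by [].
split; first exact: smooth_pev.
move=> z _.
by rewrite jac_id trmx1 mul1mx mulmx1 hess_Phi.
Qed.

End Metric.

Theorem mainTheorem5 (R : realType) (A : tensor4 R) :
  alg_curv A ->
  exists (U : set 'rV[R]_3) (g : 'rV[R]_3 -> 'M[R]_3) (p : 'rV[R]_3) (L : 'M[R]_3),
    hessian_metric U g /\ U p /\
    (forall u v : 'rV[R]_3, (u *m L) *m (v *m L)^T = u *m g p *m v^T) /\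
    (forall u1 u2 u3 u4 : 'rV[R]_3,
       ev4 (fun i j k l => riem g i j k l p) u1 u2 u3 u4
       = ev4 A (u1 *m L) (u2 *m L) (u3 *m L) (u4 *m L)).
Proof.
move=> hA.
have [a1 [a2 [a3 [b12 [b13 [b21 [b23 [b31 [b32 [c Hd]]]]]]]]]] :=
  solv_all (4 * A o0 o1 o0 o1) (4 * A o0 o2 o0 o2) (4 * A o1 o2 o1 o2)
           (4 * A o0 o1 o0 o2) (4 * A o0 o1 o1 o2) (4 * A o0 o2 o1 o2).
have [del [hdel hpd]] := gm_pd a1 a2 a3 b12 b13 b21 b23 b31 b32 c.
exists (ball 0 del), (gm a1 a2 a3 b12 b13 b21 b23 b31 b32 c), 0, 1%:M.
split; first exact: metric_ok.
split; first exact: ballxx.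
split; first by move=> u v; rewrite gm0 !mulmx1.
have hRA : (fun i j k l => riem (gm a1 a2 a3 b12 b13 b21 b23 b31 b32 c) i j k l 0) = A.
  have tA : tsym A by move=> i j k l; have [h1 [h2 [h3 _]]] := hA i j k l.
  have [d1 d2 d3 d4 [d5 d6]] := DF_base a1 a2 a3 b12 b13 b21 b23 b31 b32 c.
  case: Hd => e1 e2 e3 e4 [e5 e6].
  have h4 : (4:R) != 0 by rewrite pnatr_eq0.
  have ext := tensor_ext (DF_sym a1 a2 a3 b12 b13 b21 b23 b31 b32 c) tA.
  apply/funext => i; apply/funext => j; apply/funext => k; apply/funext => l.
  rewrite riem0 Rx_Dform; apply: ext => {i j k l}; apply: (mulfI h4).
  - by rewrite d1 e1.
  - by rewrite d2 e2.
  - by rewrite d3 e3.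
  - by rewrite d4 e4.
  - by rewrite d5 e5.
  - by rewrite d6 e6.
by move=> u1 u2 u3 u4; rewrite hRA !mulmx1.
Qed.
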